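(* Let $G$ be a simple graph on $X=\{x_1,\ldots,x_n\}$ and let $G'$ be the graph obtained from $G$ by duplicating every vertex of $G$ exactly $k-1$ times. Then $G$ is shellable if and only if $G'$ is $k$-shellable.
   Context: Duplicating each vertex $k-1$ times gives the graph $G'$ with vertex set $\{x_{ij}:1\le i\le n,1\le j\le k\}$ and edge set $\{x_{ir}x_{js}: x_ix_j\in E(G),\ 1\le r,s\le k\}$. The independence complex $\Delta_G$ of a graph $G$ has as faces the sets of pairwise non-adjacent vertices. A graph is shellable (resp. $k$-shellable) if $\Delta_G$ is. $\langle F_1,\ldots,F_s\rangle$ denotes the simplicial complex with facets $F_1,\dots,F_s$. A complex is shellable if its facets can be ordered $F_1,\ldots,F_r$ with $\langle F_j\rangle\cap\langle F_1,\ldots,F_{j-1}\rangle$ pure of dimension $\dim F_j-1$ for all $j\ge2$. A complex $\Gamma$ of dimension $d$ is $k$-shellable ($1\le k\le d+1$) if its facets can be ordered $F_1,\ldots,F_r$ such that for every $j=2,\ldots,r$, $\Gamma_j=\langle F_j\rangle\cap\langle F_1,\ldots,F_{j-1}\rangle$ satisfies (i) $\Gamma_j$ is generated by a nonempty set of faces of $\langle F_j\rangle$ of dimension $|F_j|-k-1$; (ii) if $\Gamma_j$ has more than one facet, then for every two distinct facets $\sigma,\tau$ of $\Gamma_j$, $F_j\subseteq\sigma\cup\tau$. *)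

(* Defs.v *)
From mathcomp Require Import all_boot.
Set Implicit Arguments. Unset Strict Implicit. Unset Printing Implicit Defensive.

Section Complexes.
Variable T : finType.

Definition gen (s : seq {set T}) : {set {set T}} :=
  [set sigma : {set T} | has (fun F : {set T} => sigma \subset F) s].

Definition facets (D : {set {set T}}) : {set {set T}} :=
  [set F in D | [forall G in D, (F \subset G) ==> (G == F)]].

(* d + 1 where d = dim D (maximal cardinality of a face) *)
Definition dim1 (D : {set {set T}}) : nat := \max_(F in D) #|F|.

(* G_j = <F_j> ∩ <F_1,...,F_{j-1}>  (j is 0-indexed here: s`_j with j >= 1) *)
Definition shell_int (s : seq {set T}) (j : nat) : {set {set T}} :=
  gen [:: nth set0 s j] :&: gen (take j s).

Definition facet_order (D : {set {set T}}) (s : seq {set T}) : Prop :=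
  uniq s /\ [set F in s] = facets D.

Definition pure_card (G : {set {set T}}) (m : nat) : Prop :=
  forall sigma, sigma \in facets G -> #|sigma| = m.

Definition shellable (D : {set {set T}}) : Prop :=
  exists s : seq {set T}, facet_order D s /\
    forall j, 0 < j < size s ->
      pure_card (shell_int s j) (#|nth set0 s j| - 1).

Definition k_shellable (D : {set {set T}}) (k : nat) : Prop :=
  1 <= k <= dim1 D /\
  exists s : seq {set T}, facet_order D s /\
    forall j, 0 < j < size s ->
      let Fj := nth set0 s j in
      let Gj := shell_int s j in
      (* (i) Gj is generated by a nonempty set of faces of <Fj> of
             dimension |Fj| - k - 1, i.e. of cardinality |Fj| - k *)
      (k <= #|Fj| /\
       exists A : seq {set T}, A != [::] /\
         (forall sigma, sigma \in A -> (sigma \subset Fj) /\ #|sigma| = #|Fj| - k) /\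
         Gj = gen A) /\
      (forall sigma tau, sigma \in facets Gj -> tau \in facets Gj ->
         sigma != tau -> Fj \subset sigma :|: tau).

End Complexes.

Definition indep_complex (T : finType) (e : rel T) : {set {set T}} :=
  [set sigma : {set T} | [forall x in sigma, forall y in sigma, ~~ e x y]].

(* G' : each vertex x of G replaced by copies (x, r), r < k;
   (x,r) ~ (y,s) iff x ~ y in G *)
Definition dup_rel (V : finType) (e : rel V) (k : nat) : rel (V * 'I_k) :=
  fun p q => e p.1 q.1.
Arguments dup_rel {V} e k p q.

(* Main.v *)
Require Import Defs.
From mathcomp Require Import all_boot.
Set Implicit Arguments. Unset Strict Implicit. Unset Printing Implicit Defensive.

Section Gen.
Variable T : finType.
Implicit Types (D : {set {set T}}) (s : seq {set T}) (A B F : {set T}).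

Lemma facetsP D F : F \in facets D <-> F \in D /\ (forall G, G \in D -> F \subset G -> G = F).
Proof.
rewrite inE; split.
  move=> /andP[FD /forallP H]; split=> // G GD FG; apply/eqP.
  by have := H G; rewrite GD FG.
move=> [FD H]; rewrite FD /=; apply/forallP=> G; apply/implyP=> GD; apply/implyP=> FG.
by rewrite (H G GD FG).
Qed.

Lemma genP s B : reflect (exists2 F, F \in s & B \subset F) (B \in gen s).
Proof. rewrite inE; exact: hasP. Qed.

Lemma gen_down s A B : A \subset B -> B \in gen s -> A \in gen s.
Proof.
move=> AB /genP[F Fs BF]; apply/genP; exists F => //; exact: subset_trans AB BF.
Qed.

Lemma shell_down s j A B : A \subset B -> B \in shell_int s j -> A \in shell_int s j.
Proof.
by move=> AB; rewrite inE => /andP[h1 h2]; rewrite inE (gen_down AB h1) (gen_down AB h2).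
Qed.

Lemma facet_exists D B : B \in D -> exists2 F, F \in facets D & B \subset F.
Proof.
move=> BD.
pose P := fun F : {set T} => (F \in D) && (B \subset F).
have P0 : P B by rewrite /P BD subxx.
case: (arg_maxnP (fun F : {set T} => #|F|) P0) => F /andP[FD BF] Fmax.
exists F => //; apply/facetsP; split=> // G GD FG.
have := Fmax G; rewrite /P GD (subset_trans BF FG) => /(_ isT) le.
by apply/eqP; rewrite eq_sym eqEcard FG; exact: le.
Qed.

Lemma facets_gen_sub s B : B \in facets (gen s) -> B \in s.
Proof.
move=> /facetsP[/genP[F Fs BF] H].
have -> : B = F by apply/esym/H => //; apply/genP; exists F.
done.
Qed.

End Gen.

Section Lift.
Variables (V : finType) (k : nat).
Hypothesis hk : 0 < k.
Implicit Types (A F : {set V}) (B C : {set V * 'I_k}) (s : seq {set V}) (D : {set {set V}}).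

Definition lift A : {set V * 'I_k} := [set p | p.1 \in A].
Definition proj B : {set V} := [set x | [exists r, (x, r) \in B]].

Lemma sub_lift B A : (B \subset lift A) = (proj B \subset A).
Proof.
apply/subsetP/subsetP => H.
  move=> x; rewrite inE => /existsP[r xr]; by have := H _ xr; rewrite inE.
move=> [x r] xr; rewrite inE /=; apply: H; rewrite inE; apply/existsP; by exists r.
Qed.

Lemma projK : cancel lift proj.
Proof.
move=> A; apply/setP=> x; rewrite inE; apply/existsP/idP.
  by move=> [r]; rewrite inE.
by move=> xA; exists (Ordinal hk); rewrite inE.
Qed.

Lemma lift_inj : injective lift. Proof. exact: can_inj projK. Qed.

Lemma sub_liftproj B : B \subset lift (proj B).
Proof. by rewrite sub_lift. Qed.

Lemma proj_mono B C : B \subset C -> proj B \subset proj C.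
Proof. move=> BC; rewrite -sub_lift; exact: subset_trans BC (sub_liftproj C). Qed.

Lemma lift_mono A F : A \subset F -> lift A \subset lift F.
Proof. by rewrite sub_lift projK. Qed.

Lemma card_lift A : #|lift A| = #|A| * k.
Proof.
have -> : lift A = setX A [set: 'I_k] by apply/setP=> [[x r]]; rewrite !inE andbT.
by rewrite cardsX cardsT card_ord.
Qed.

Lemma liftU A F : lift (A :|: F) = lift A :|: lift F.
Proof. by apply/setP=> p; rewrite !inE. Qed.

Lemma facets_pre D : facets [set B | proj B \in D] = lift @: facets D.
Proof.
apply/setP=> B; apply/idP/idP.
  move=> /facetsP[]; rewrite inE => BD H.
  have E : lift (proj B) = B.
    by apply: H; [rewrite inE projK | exact: sub_liftproj].
  rewrite -E; apply: imset_f; apply/facetsP; split=> // F FD BF.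
  have L : lift F = B.
    apply: H; first by rewrite inE projK.
    by rewrite -E; exact: lift_mono.
  by rewrite -L projK.
move=> /imsetP[A /facetsP[AD H] ->]; apply/facetsP; split; first by rewrite inE projK.
move=> C; rewrite inE => CD AC.
have := proj_mono AC; rewrite projK => AC'.
have := H _ CD AC' => E.
apply/eqP; rewrite eqEsubset AC andbT sub_lift E subxx //.
Qed.

Lemma gen_map s B : (B \in gen (map lift s)) = (proj B \in gen s).
Proof. by rewrite !inE has_map; apply: eq_has => F /=; rewrite sub_lift. Qed.

Lemma shell_map s j : j < size s ->
  shell_int (map lift s) j = [set B | proj B \in shell_int s j].
Proof.
move=> js; apply/setP=> B; rewrite /shell_int !inE (nth_map set0) // -map_take.
have -> : [:: lift (nth set0 s j)] = map lift [:: nth set0 s j] by [].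
by rewrite !has_map; congr andb; apply: eq_has => F /=; rewrite sub_lift.
Qed.

Lemma indep_pre (e : rel V) :
  indep_complex (dup_rel e k) = [set B | proj B \in indep_complex e].
Proof.
apply/setP=> B; rewrite !inE; apply/forallP/forallP.
  move=> H x; apply/implyP; rewrite inE => /existsP[r xr]; apply/forallP=> y.
  apply/implyP; rewrite inE => /existsP[r' yr].
  by have := H (x, r); rewrite xr /= => /forallP/(_ (y, r')); rewrite yr.
move=> H [x r]; apply/implyP => xr; apply/forallP=> [[y r']]; apply/implyP=> yr.
have := H x; rewrite inE; have -> : [exists r0, (x, r0) \in B] by apply/existsP; exists r.
move=> /forallP/(_ y); rewrite inE.
by have -> : [exists r0, (y, r0) \in B] by apply/existsP; exists r'.
Qed.

End Lift.
Unset Implicit Arguments.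

Theorem theorem4p2 (V : finType) (e : rel V) (k : nat) :
  symmetric e -> irreflexive e -> 0 < #|V| -> 0 < k ->
  shellable (indep_complex e) <-> k_shellable (indep_complex (dup_rel e k)) k.
Proof.
move=> esym eirr V0 hk.
rewrite indep_pre.
set D := indep_complex e.
case/card_gt0P: V0 => v _.
have vD : [set v] \in D.
  rewrite inE; apply/forallP=> x; apply/implyP; rewrite in_set1 => /eqP->.
  apply/forallP=> y; apply/implyP; rewrite in_set1 => /eqP->; by rewrite eirr.
have fne : forall F, F \in facets D -> 0 < #|F|.
  move=> F /facetsP[FD H]; rewrite card_gt0; apply/negP => /eqP F0.
  have := H _ vD; rewrite F0 sub0set => /(_ isT) /setP /(_ v).
  by rewrite !inE eqxx.
split.
- move=> [s [[us sF] Hs]]; split.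
    apply/andP; split=> //.
    have Lv : lift k [set v] \in [set B | proj B \in D] by rewrite inE projK.
    have := leq_bigmax_cond (F := fun F : {set V * 'I_k} => #|F|) (P := mem [set B | proj B \in D]) _ Lv.
    rewrite card_lift cards1 mul1n; exact.
  exists (map (lift k) s); split.
    split; first by rewrite map_inj_uniq //; exact: lift_inj.
    rewrite facets_pre // -sF; apply/setP=> B; rewrite inE.
    apply/mapP/imsetP => -[F Fs ->]; exists F => //; by rewrite inE in Fs *.
  move=> j; rewrite size_map => /andP[j0 js].
  rewrite shell_map // (nth_map set0) //.
  set Fj := nth set0 s j; set G := shell_int s j.
  have FjD : Fj \in facets D by rewrite -sF inE mem_nth.
  have HG : pure_card G (#|Fj| - 1) by apply: Hs; rewrite j0 js.
  have Gsub : forall t, t \in G -> t \subset Fj.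
    move=> t; rewrite inE => /andP[/genP[F] ]; rewrite inE => /eqP -> //.
  have G0 : set0 \in G.
    rewrite inE; apply/andP; split; apply/genP.
      by exists Fj; rewrite ?inE ?sub0set.
    exists (nth set0 (take j s) 0); rewrite ?sub0set //.
    by apply: mem_nth; rewrite size_take js.
  have Fj0 := fne _ FjD.
  split.
    split; first by rewrite card_lift leq_pmull.
    exists (map (lift k) (enum (facets G))); split.
      have [t tf _] := facet_exists G0.
      case E: (enum (facets G)) => [|x l] //.
      by have := tf; rewrite -mem_enum E in_nil.
    split.
      move=> sg /mapP[t]; rewrite mem_enum => tf ->.
      have tG : t \in G by case/facetsP: tf.
      split; first by apply: lift_mono => //; exact: Gsub.
      by rewrite !card_lift (HG t tf) mulnBl mul1n.
    apply/setP=> B; rewrite inE gen_map; apply/idP/idP.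
      move=> /facet_exists [t tf pt]; apply/genP; exists t; by rewrite ?mem_enum.
    move=> /genP[t]; rewrite mem_enum => /facetsP[tG _] pt; exact: shell_down pt tG.
  move=> sg tau; rewrite facets_pre // => /imsetP[a af ->] /imsetP[b bf ->] neq.
  have ab : a != b by apply: contraNneq neq => ->.
  rewrite -liftU; apply: lift_mono => //.
  have aF : a \subset Fj by apply: Gsub; case/facetsP: af.
  have bF : b \subset Fj by apply: Gsub; case/facetsP: bf.
  have ca := HG a af; have cb := HG b bf.
  have nba : ~~ (b \subset a).
    apply: contra ab => ba; rewrite eq_sym eqEcard ba ca cb leqnn //.
  have pr : a \proper a :|: b by rewrite properE subsetUl subUset subxx.
  have := proper_card pr; rewrite ca => lt.
  have : a :|: b == Fj.
    rewrite eqEcard subUset aF bF /=.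
    by move: lt; case: #|Fj| Fj0 => // n _; rewrite subSS subn0.
  by move/eqP->.
- move=> [_ [s' [[us' sF'] Hs']]].
  rewrite facets_pre // in sF'.
  have [s Es] : exists s, s' = map (lift k) s.
    exists (map (@proj _ _) s'); rewrite -map_comp map_id_in // => B Bs.
    have : B \in [set F in s'] by rewrite inE.
    by rewrite sF' => /imsetP[A _ ->] /=; rewrite projK.
  subst s'.
  exists s; split.
    split; first exact: map_uniq us'.
    apply/setP=> F; move/setP: (sF') => /(_ (lift k F)).
    rewrite [in X in X -> _]inE (mem_map (lift_inj hk)) => H.
    rewrite [LHS]inE H; apply/imsetP/idP => [[x xf /(lift_inj hk) ->]|Ff] //.
    by exists F.
  move=> j /andP[j0 js] sg sgf.
  have := Hs' j; rewrite size_map j0 js => /(_ isT) [[_ [A [_ [HA GA]]]] _].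
  rewrite shell_map // (nth_map set0) // in HA GA.
  have : lift k sg \in facets [set B | proj B \in shell_int s j].
    by rewrite facets_pre // imset_f.
  rewrite GA => /facets_gen_sub /HA [_]; rewrite !card_lift => E.
  by apply/eqP; rewrite -(eqn_pmul2r hk) E mulnBl mul1n.
Qed.
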